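(* Let $a$ be a point of $AG(4,3)$ and let $D$ be a cap which is the union of five pairwise disjoint $a$-lines (so $|D|=10$ and $a\notin D$). Then $D$ is a demicap with anchor point $a$ if and only if for every point $b\notin D\cup\{a\}$, the set $D\cup\{b\}$ contains at most one line.
   Context: $AG(4,3)$ is the affine space $\mathbb{F}_3^4$; a line is a set of three distinct points $\{x,y,z\}$ with $x+y+z=0$. A cap is a set of points containing no line. A hyperplane is a $3$-dimensional affine subspace of $\mathbb{F}_3^4$; a set of points is co-hyperplanar if it lies in a common hyperplane. For a point $a$, an $a$-line is a pair of points $\{b,c\}$ such that $\{a,b,c\}$ is a line. A demicap with anchor point $a$ is a cap consisting of the $10$ points of five $a$-lines such that no four of these five $a$-lines are co-hyperplanar (i.e. the $8$ points of any four of them do not lie in a common hyperplane). *)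

(* Defs.v *)
(* AG(4,3) = F_3^4 modelled as row vectors 'rV['F_3]_4. *)
From HB Require Import structures.
From mathcomp Require Import all_boot all_order all_algebra.
Set Implicit Arguments. Unset Strict Implicit. Unset Printing Implicit Defensive.
Import GRing.Theory.
Local Open Scope ring_scope.

Definition point := 'rV['F_3]_4.

Definition is_line (l : {set point}) : bool :=
  [exists x : point, exists y : point, exists z : point,
    [&& x != y, y != z, x != z, x + y + z == 0 & l == [set x; y; z]]].

Definition cap (S : {set point}) : bool :=
  [forall l : {set point}, is_line l ==> ~~ (l \subset S)].

Definition lines_in (S : {set point}) : {set {set point}} :=
  [set l : {set point} | is_line l && (l \subset S)].

Definition aline (a : point) (p : {set point}) : bool :=
  [exists b : point, exists c : point,
    (p == [set b; c]) && is_line [set a; b; c] && (a != b) && (a != c) && (b != c)].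

Definition hyperplane (H : {set point}) : Prop :=
  exists (p : point) (U : 'M['F_3]_4),
    \rank U = 3%N /\ H = [set x : point | (x - p <= U)%MS].

Definition cohyperplanar (S : {set point}) : Prop :=
  exists H : {set point}, hyperplane H /\ S \subset H.

Definition demicap (a : point) (D : {set point}) : Prop :=
  cap D /\
  exists L : {set {set point}},
    #|L| = 5%N /\ {in L, forall l, aline a l} /\ trivIset L /\ cover L = D /\
        #|D| = 10%N /\
        forall L' : {set {set point}}, L' \subset L -> #|L'| = 4%N ->
          ~ cohyperplanar (cover L').

(* Main.v *)
Require Import Defs.
From mathcomp Require Import all_boot all_order all_algebra.
Set Implicit Arguments. Unset Strict Implicit. Unset Printing Implicit Defensive.
Import GRing.Theory.
Local Open Scope ring_scope.

Lemma F3c (k : 'F_3) : k = 0 \/ k = 1 \/ k = -1.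
Proof. by case: k => [[|[|[|//]]] H]; [left|right;left|right;right]; apply/eqP. Qed.

Ltac bf2 x y := let i := fresh "i" in apply/rowP => i; rewrite !mxE; move: (x 0 i) (y 0 i);
  do 2! case=> [[|[|[|//]]] ?]; by apply/eqP.
Ltac bf3 x y z := let i := fresh "i" in apply/rowP => i; rewrite !mxE; move: (x 0 i) (y 0 i) (z 0 i);
  do 3! case=> [[|[|[|//]]] ?]; by apply/eqP.

Lemma sum3 (x y z : point) : x != y -> y != z -> x != z ->
  \sum_(i in [set x; y; z]) i = x + y + z.
Proof.
move=> xy yz xz.
have -> : [set x; y; z] = x |: (y |: [set z]) by apply/setP => t; rewrite !inE orbA.
rewrite big_setU1 /=; last by rewrite !inE negb_or xy xz.
rewrite big_setU1 /=; last by rewrite !inE yz.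
by rewrite big_set1 addrA.
Qed.

Lemma is_line3 (x y z : point) : x != y -> y != z -> x != z ->
  is_line [set x; y; z] -> x + y + z = 0.
Proof.
move=> xy yz xz /existsP[p /existsP[q /existsP[r /and5P[pq qr pr /eqP s /eqP E]]]].
by rewrite -sum3 // E sum3.
Qed.

Lemma line3 (x y z : point) : x != y -> y != z -> x != z ->
  x + y + z = 0 -> is_line [set x; y; z].
Proof.
move=> xy yz xz s; apply/existsP; exists x; apply/existsP; exists y;
apply/existsP; exists z; by rewrite xy yz xz s !eqxx.
Qed.

Lemma third_eq (x y z : point) : x + y + z = 0 -> z = - x - y.
Proof. by move=> h; apply/eqP; rewrite -subr_eq0 -h; apply/eqP; bf3 x y z. Qed.

Lemma aline_rep a B : aline a B -> forall x, x \in B ->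
  [/\ B = [set x; - a - x], x != a & - a - x != x].
Proof.
move=> /existsP[b /existsP[c /andP[/andP[/andP[/andP[/eqP EB l] ab] ac] bc]]].
have s := is_line3 ab bc ac l.
have ec : c = - a - b by rewrite (third_eq s).
move=> x; rewrite EB !inE => /orP[]/eqP->.
  by rewrite -ec; split => //; rewrite eq_sym.
have eb : b = - a - c by apply/eqP; rewrite ec -subr_eq0; apply/eqP; bf2 a b.
rewrite -eb; split => //; last by rewrite eq_sym.
by apply/setP => t; rewrite !inE orbC.
Qed.

Lemma in_cover (L : {set {set point}}) B x : B \in L -> x \in B -> x \in cover L.
Proof. by move=> BL xB; apply/bigcupP; exists B. Qed.

Lemma disj_blocks (L : {set {set point}}) B C x : trivIset L -> B \in L -> C \in L ->
  B != C -> x \in B -> x \in C -> False.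
Proof.
move=> /trivIsetP tL BL CL BC xB xC.
by have := tL B C BL CL BC => /disjointFr/(_ xB); rewrite xC.
Qed.

Lemma cover_rep a (L : {set {set point}}) x : {in L, forall l, aline a l} -> trivIset L ->
  x \in cover L -> [/\ pblock L x \in L, pblock L x = [set x; -a - x], x != a & -a - x != x].
Proof.
move=> HL tL xc.
have BL := pblock_mem xc.
have := aline_rep (HL _ BL) (x:=x); rewrite mem_pblock xc => /(_ isT) [E xa px].
by split.
Qed.

Lemma partner_cover a (L : {set {set point}}) x : {in L, forall l, aline a l} -> trivIset L ->
  x \in cover L -> -a - x \in cover L.
Proof.
move=> HL tL xc; have [BL E _ _] := cover_rep HL tL xc.
by apply: (in_cover BL); rewrite E !inE eqxx orbT.
Qed.

Lemma same_block a (L : {set {set point}}) x z : {in L, forall l, aline a l} -> trivIset L ->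
  x \in cover L -> z \in cover L -> pblock L x = pblock L z -> z = x \/ z = -a - x.
Proof.
move=> HL tL xc zc E.
have [_ Ex _ _] := cover_rep HL tL xc.
have : z \in pblock L z by rewrite mem_pblock.
by rewrite -E Ex !inE => /orP[]/eqP; [left|right].
Qed.

Ltac bfh2 x y := let i := fresh "i" in let H := fresh "H" in let h := fresh "h" in
  move=> /rowP H; apply/rowP => i; move: (H i); rewrite !mxE; move: (x 0 i) (y 0 i);
  do 2! case=> [[|[|[|//]]] ?]; move=> /eqP h; apply/eqP; move: h; apply/implyP; by [].

Lemma char3a (p q : point) : q = -p - q -> p = q.
Proof. bfh2 p q. Qed.
Lemma char3b (p q : point) : p = -p - q -> p = q.
Proof. bfh2 p q. Qed.

Lemma capZ (D : {set point}) p q r : cap D -> p \in D -> q \in D -> r \in D ->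
  p + q + r = 0 -> p = q.
Proof.
move=> cD pD qD rD s; apply/eqP/negPn/negP => pq.
have er := third_eq s.
have qr : q != r.
  apply/negP => /eqP qr; move: pq; rewrite er in qr.
  suff -> : p = q by rewrite eqxx.
  exact: char3a.
have pr : p != r.
  apply/negP => /eqP pr; move: pq; rewrite er in pr.
  suff -> : p = q by rewrite eqxx.
  exact: char3b.
move/forallP: cD => /(_ [set p; q; r]); rewrite line3 //= => /negP; apply.
by apply/subsetP => t; rewrite !inE => /orP[/orP[]|]/eqP->.
Qed.

Lemma LA1 m (M : 'M['F_3]_(m, 4)) : (\rank M <= 3)%N ->
  exists U : 'M['F_3]_4, \rank U = 3%N /\ (M <= U)%MS.
Proof.
move=> rM.
set K := cokermx M.
have rK : (0 < \rank K)%N by rewrite /K mxrank_coker subn_gt0 (leq_ltn_trans rM).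
have [j cj] : exists j, col j K != 0.
  apply/existsP; apply: contraTT rK; rewrite negb_exists => /forallP cK.
  rewrite lt0n negbK mxrank_eq0; apply/eqP/matrixP => i j.
  have := cK j; rewrite negbK => /eqP/matrixP/(_ i 0).
  by rewrite !mxE.
exists (kermx (col j K)); split.
  rewrite mxrank_ker.
  have r1 : \rank (col j K) = 1%N.
    apply/eqP; rewrite eqn_leq rank_leq_col lt0n mxrank_eq0 cj //.
  by rewrite r1.
apply/sub_kermxP.
by rewrite colE mulmxA -colE /K mulmx_coker col0.
Qed.

Lemma LA2 (M : 'M['F_3]_4) (U : 'M['F_3]_4) : \rank U = 3%N -> (M <= U)%MS ->
  (forall v : 'rV_4, v *m M = 0 -> v = 0) -> False.
Proof.
move=> rU MU /inj_row_free; rewrite -row_leq_rank => r4.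
by have := leq_trans r4 (mxrankS MU); rewrite rU.
Qed.

Ltac c1 := let u := fresh "u" in intro u; case: u => [[|[|[|//]]] ?].
Ltac fin := let h := fresh "h" in move=> /eqP h; apply/eqP; move: h; apply/implyP; exact isT.

Lemma A_S2 (a q r : point) : (q - a) + (r - a) = 0 -> r = -a - q.
Proof. move=> H; apply/rowP => i; have := congr1 (fun M : point => M 0 i) H; rewrite !mxE; clear H; move: (a 0 i) (q 0 i) (r 0 i); do 3 c1; fin. Qed.
Lemma A_S3 (a q r s : point) : (q - a) + (r - a) + (s - a) = 0 -> q + r + s = 0.
Proof. move=> H; apply/rowP => i; have := congr1 (fun M : point => M 0 i) H; rewrite !mxE; clear H; move: (a 0 i) (q 0 i) (r 0 i) (s 0 i); do 4 c1; fin. Qed.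
Lemma A_S4 (a q0 q1 q2 q3 : point) : (q0 - a) + (q1 - a) + (q2 - a) + (q3 - a) = 0 ->
   (- q0 - q1) + (-a - q2) + (-a - q3) = 0.
Proof. move=> H; apply/rowP => i; have := congr1 (fun M : point => M 0 i) H; rewrite !mxE; clear H; move: (a 0 i) (q0 0 i) (q1 0 i) (q2 0 i) (q3 0 i); do 5 c1; fin. Qed.
Lemma A_ba (a q0 q1 : point) : - q0 - q1 = a -> q1 = -a - q0.
Proof. move=> H; apply/rowP => i; have := congr1 (fun M : point => M 0 i) H; rewrite !mxE; clear H; move: (a 0 i) (q0 0 i) (q1 0 i); do 3 c1; fin. Qed.

Lemma partner_in a (L : {set {set point}}) B x : {in L, forall l, aline a l} ->
  B \in L -> x \in B -> -a - x \in B.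
Proof.
move=> HL BL xB; have [E _ _] := aline_rep (HL _ BL) xB.
by rewrite E !inE eqxx orbT.
Qed.

Lemma neg_rel (x a : point) : -(x - a) = (-a - x) - a.
Proof. move: x a; move=> x a; apply/rowP => i; rewrite !mxE; move: (x 0 i) (a 0 i); do 2 c1; apply/eqP; exact isT. Qed.

Lemma S1 a (L : {set {set point}}) (HL : {in L, forall l, aline a l}) (tL : trivIset L)
  (q : point) (B : {set point}) : q - a = 0 -> q \in B -> B \in L -> False.
Proof.
move=> /eqP; rewrite subr_eq0 => /eqP qa qB BL.
have [_ _ /negP] := cover_rep HL tL (in_cover BL qB); by rewrite qa eqxx.
Qed.

Lemma S2 a (L : {set {set point}}) (HL : {in L, forall l, aline a l}) (tL : trivIset L)
  (q r : point) (B C : {set point}) : q - a + (r - a) = 0 -> q \in B -> r \in C -> B \in L -> C \in L -> B != C -> False.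
Proof.
move=> /A_S2 er qB rC BL CL BC.
apply: (disj_blocks tL BL CL BC _ rC); rewrite er; exact: partner_in HL BL qB.
Qed.

Lemma S3 a (L : {set {set point}}) (HL : {in L, forall l, aline a l}) (tL : trivIset L)
  (cD : cap (cover L))
  (q r s : point) (B C E : {set point}) : q - a + (r - a) + (s - a) = 0 -> q \in B -> r \in C -> s \in E ->
  B \in L -> C \in L -> E \in L -> B != C -> False.
Proof.
move=> /A_S3 e qB rC sE BL CL EL BC.
have qr := capZ cD (in_cover BL qB) (in_cover CL rC) (in_cover EL sE) e.
by apply: (disj_blocks tL BL CL BC qB); rewrite qr.
Qed.

Lemma A_e1 (q0 q1 : point) : q0 + q1 + (- q0 - q1) = 0.
Proof. apply/rowP => i; rewrite !mxE; move: (q0 0 i) (q1 0 i); do 2 c1; apply/eqP; exact isT. Qed.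

Lemma S4 a (L : {set {set point}}) (HL : {in L, forall l, aline a l}) (tL : trivIset L)
  (cD : cap (cover L))
  (Hb : forall b : point, b \notin cover L -> b != a -> (#|lines_in (b |: cover L)| <= 1)%N)
  (q0 q1 q2 q3 : point) (B0 B1 B2 B3 : {set point}) :
  q0 - a + (q1 - a) + (q2 - a) + (q3 - a) = 0 ->
  q0 \in B0 -> q1 \in B1 -> q2 \in B2 -> q3 \in B3 ->
  B0 \in L -> B1 \in L -> B2 \in L -> B3 \in L ->
  B0 != B1 -> B0 != B2 -> B0 != B3 -> B2 != B3 -> False.
Proof.
move=> /A_S4 e q0B q1B q2B q3B B0L B1L B2L B3L d01 d02 d03 d23.
set b := - q0 - q1 in e *.
set p2 := - a - q2 in e *.
set p3 := - a - q3 in e *.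
have p2B : p2 \in B2 by exact: partner_in HL B2L q2B.
have p3B : p3 \in B3 by exact: partner_in HL B3L q3B.
have q0D := in_cover B0L q0B; have q1D := in_cover B1L q1B.
have p2D := in_cover B2L p2B; have p3D := in_cover B3L p3B.
have nq01 : q0 != q1.
  by apply/eqP => E; apply: (disj_blocks tL B0L B1L d01 q0B); rewrite E.
have bnD : b \notin cover L.
  apply/negP => bD; have := capZ cD q0D q1D bD (A_e1 q0 q1).
  by move/eqP; rewrite (negbTE nq01).
have ba : b != a.
  apply/eqP => /A_ba E; apply: (disj_blocks tL B0L B1L d01 _ q1B).
  by rewrite E; exact: partner_in HL B0L q0B.
have nD x : x \in cover L -> x != b.
  by move=> xD; apply/eqP => E; move: bnD; rewrite -E xD.
have np23 : p2 != p3.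
  by apply/eqP => E; apply: (disj_blocks tL B2L B3L d23 p2B); rewrite E.
have nq02 : q0 != p2.
  by apply/eqP => E; apply: (disj_blocks tL B0L B2L d02 q0B); rewrite E.
have nq03 : q0 != p3.
  by apply/eqP => E; apply: (disj_blocks tL B0L B3L d03 q0B); rewrite E.
have := Hb b bnD ba; rewrite leqNgt => /negP; apply; apply/card_gt1P.
exists [set q0; q1; b], [set b; p2; p3]; split.
- rewrite inE line3 ?nD ?A_e1 //=.
  by apply/subsetP => t; rewrite !inE => /orP[/orP[]|]/eqP->; rewrite ?q0D ?q1D ?eqxx ?orbT.
- rewrite inE line3 // ?(eq_sym b) ?nD //=.
  by apply/subsetP => t; rewrite !inE => /orP[/orP[]|]/eqP->; rewrite ?p2D ?p3D ?eqxx ?orbT.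
- apply/negP => /eqP E.
  have : q0 \in [set b; p2; p3] by rewrite -E !inE eqxx.
  by rewrite !inE (negbTE (nD _ q0D)) (negbTE nq02) (negbTE nq03).
Qed.

Lemma core a (L : {set {set point}}) (HL : {in L, forall l, aline a l}) (tL : trivIset L)
  (cD : cap (cover L))
  (Hb : forall b : point, b \notin cover L -> b != a -> (#|lines_in (b |: cover L)| <= 1)%N)
  (x0 x1 x2 x3 : point) (B0 B1 B2 B3 : {set point}) :
  x0 \in B0 -> x1 \in B1 -> x2 \in B2 -> x3 \in B3 ->
  B0 \in L -> B1 \in L -> B2 \in L -> B3 \in L ->
  B0 != B1 -> B0 != B2 -> B0 != B3 -> B1 != B2 -> B1 != B3 -> B2 != B3 ->
  forall k0 k1 k2 k3 : 'F_3,
  k0 *: (x0 - a) + k1 *: (x1 - a) + k2 *: (x2 - a) + k3 *: (x3 - a) = 0 ->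
  [/\ k0 = 0, k1 = 0, k2 = 0 & k3 = 0].
Proof.
move=> x0B x1B x2B x3B B0L B1L B2L B3L d01 d02 d03 d12 d13 d23 k0 k1 k2 k3.
have p0B := partner_in HL B0L x0B; have p1B := partner_in HL B1L x1B.
have p2B := partner_in HL B2L x2B; have p3B := partner_in HL B3L x3B.
have [->|[->|->]] := F3c k0; have [->|[->|->]] := F3c k1;
have [->|[->|->]] := F3c k2; have [->|[->|->]] := F3c k3;
move=> rel; rewrite ?scale0r ?scale1r ?scaleN1r ?neg_rel ?add0r ?addr0 in rel;
match type of rel with
  | _ - _ + (_ - _) + (_ - _) + (_ - _) = 0 => exfalso; by eapply (S4 HL tL cD Hb rel); eassumption
  | _ - _ + (_ - _) + (_ - _) = 0 => exfalso; by eapply (S3 HL tL cD rel); eassumption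
  | _ - _ + (_ - _) = 0 => exfalso; by eapply (S2 HL tL rel); eassumption
  | _ - _ = 0 => exfalso; by eapply (S1 HL tL rel); eassumption
  | _ => by split
end.
Qed.

Lemma LineDecomp (D : {set point}) (b : point) (l : {set point}) : cap D ->
  l \in lines_in (b |: D) -> exists x y : point,
  [/\ l = [set b; x; y], x \in D, y \in D, x != y & b + x + y = 0].
Proof.
move=> cD; rewrite inE => /andP[il sl].
have il' := il.
move: il => /existsP[p /existsP[q /existsP[r /and5P[pq qr pr /eqP s /eqP E]]]].
have inD t : t \in l -> t != b -> t \in D.
  by move=> tl tb; move/subsetP: sl => /(_ t tl); rewrite !inE (negbTE tb).
have bl : b \in l.
  apply/negPn/negP => bnl.
  move/forallP: cD => /(_ l); rewrite il' /= => /negP; apply.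
  apply/subsetP => t tl; apply: (inD _ tl); apply/eqP => tb; move: bnl; by rewrite -tb tl.
move: (bl); rewrite E !inE => /orP[/orP[]|]/eqP bE.
- exists q, r; split => //; first by rewrite bE.
  + by apply: (inD q); rewrite ?E ?inE ?eqxx ?orbT // bE eq_sym.
  + by apply: (inD r); rewrite ?E ?inE ?eqxx ?orbT // bE eq_sym.
  + by rewrite bE.
- exists p, r; split => //.
  + by rewrite bE; apply/setP => t; rewrite !inE; case: (t == p); case: (t == q); case: (t == r).
  + by apply: (inD p); rewrite ?E ?inE ?eqxx ?orbT // bE.
  + by apply: (inD r); rewrite ?E ?inE ?eqxx ?orbT // bE eq_sym.
  + by rewrite bE -s (addrC q p).
- exists p, q; split => //.
  + by rewrite bE; apply/setP => t; rewrite !inE; case: (t == p); case: (t == q); case: (t == r).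
  + by apply: (inD p); rewrite ?E ?inE ?eqxx ?orbT // bE.
  + by apply: (inD q); rewrite ?E ?inE ?eqxx ?orbT // bE.
  + by rewrite bE -s [r + p]addrC -addrA [r + q]addrC addrA.
Qed.

Lemma A_dist (a b x : point) : (- b - x) + (- a - x) + (- a - (- b - (- a - x))) = 0.
Proof. apply/rowP => i; rewrite !mxE; move: (a 0 i) (b 0 i) (x 0 i); do 3 c1; apply/eqP; exact isT. Qed.
Lemma A_b (a b x : point) : b + x + (-a - x) = 0 -> b = a.
Proof. move=> H; apply/rowP => i; have := congr1 (fun M : point => M 0 i) H; rewrite !mxE; clear H;
  move: (a 0 i) (b 0 i) (x 0 i); do 3 c1; fin. Qed.

Lemma Dist a (L : {set {set point}}) (HL : {in L, forall l, aline a l}) (tL : trivIset L)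
  (cD : cap (cover L)) (x y z w b : point) :
  x \in cover L -> y \in cover L -> z \in cover L -> w \in cover L -> x != y ->
  b + x + y = 0 -> b + z + w = 0 -> b != a -> (z = x -> w = y -> False) ->
  pblock L x != pblock L z.
Proof.
move=> xc yc zc wc xy e1 e2 ba N; apply/eqP => E.
have ey := third_eq e1; have ew := third_eq e2.
have [zx|zx] := same_block HL tL xc zc E.
  by apply: (N zx); rewrite ew ey zx.
have e3 : y + z + (-a - w) = 0 by rewrite ey ew zx; exact: A_dist.
have yz := capZ cD yc zc (partner_cover HL tL wc) e3.
have E2 : pblock L x = pblock L y by rewrite E yz.
have [yx|yx] := same_block HL tL xc yc E2; first by rewrite yx eqxx in xy.
have := A_b (a:=a) (b:=b) (x:=x); rewrite -yx => /(_ e1) bA.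
by rewrite bA eqxx in ba.
Qed.

Lemma A_w (a b x z : point) : (-b - z) - a = (x - a) + ((-b - x) - a) - (z - a).
Proof. apply/rowP => i; rewrite !mxE; move: (a 0 i) (b 0 i) (x 0 i) (z 0 i); do 4 c1; apply/eqP; exact isT. Qed.

Lemma inH a (U : 'M['F_3]_4) (x t : point) : (x - a <= U)%MS -> t \in [set x; -a - x] -> (t - a <= U)%MS.
Proof.
move=> xU; rewrite !inE => /orP[]/eqP-> //.
by rewrite -[- a - x - a]opprK -neg_rel opprK eqmx_opp.
Qed.

Lemma fwd a (L : {set {set point}}) (HL : {in L, forall l, aline a l}) (tL : trivIset L)
  (cD : cap (cover L))
  (Hnh : forall L' : {set {set point}}, L' \subset L -> #|L'| = 4%N -> ~ cohyperplanar (cover L'))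
  (b : point) : b \notin cover L -> b != a -> (#|lines_in (b |: cover L)| <= 1)%N.
Proof.
move=> bD ba; rewrite leqNgt; apply/negP => /card_gt1P [l1 [l2 [l1in l2in l12]]].
have [x [y [El1 xD yD xy e1]]] := LineDecomp cD l1in.
have [z [w [El2 zD wD zw e2]]] := LineDecomp cD l2in.
have N1 : z = x -> w = y -> False.
  by move=> zx wy; move: l12; rewrite El1 El2 zx wy eqxx.
have N2 : z = y -> w = x -> False.
  move=> zy wx; move: l12; rewrite El1 El2 zy wx; apply/negP; rewrite negbK.
  by apply/eqP/setP => t; rewrite !inE orbAC.
have e1' : b + y + x = 0 by rewrite -addrA (addrC y) addrA.
have e2' : b + w + z = 0 by rewrite -addrA (addrC w) addrA.
have yx : y != x by rewrite eq_sym.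
have wz : w != z by rewrite eq_sym.
have Bxy : pblock L x != pblock L y.
  apply/eqP => E; have [E1|E1] := same_block HL tL xD yD E; first by rewrite E1 eqxx in xy.
  by have := A_b (a:=a) (b:=b) (x:=x); rewrite -E1 => /(_ e1) bA; rewrite bA eqxx in ba.
have Bzw : pblock L z != pblock L w.
  apply/eqP => E; have [E1|E1] := same_block HL tL zD wD E; first by rewrite E1 eqxx in zw.
  by have := A_b (a:=a) (b:=b) (x:=z); rewrite -E1 => /(_ e2) bA; rewrite bA eqxx in ba.
have dxz := Dist HL tL cD xD yD zD wD xy e1 e2 ba N1.
have dxw := Dist HL tL cD xD yD wD zD xy e1 e2' ba (fun h1 h2 => N2 h2 h1).
have dyz := Dist HL tL cD yD xD zD wD yx e1' e2 ba N2.
have dyw := Dist HL tL cD yD xD wD zD yx e1' e2' ba (fun h1 h2 => N1 h2 h1).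
have [_ Ex _ _] := cover_rep HL tL xD.
have [_ Ey _ _] := cover_rep HL tL yD.
have [_ Ez _ _] := cover_rep HL tL zD.
have [_ Ew _ _] := cover_rep HL tL wD.
apply: (Hnh (pblock L x |: (pblock L y |: (pblock L z |: [set pblock L w])))).
- apply/subsetP => B.
  by move=> /setU1P[->|/setU1P[->|/setU1P[->|/set1P->]]]; apply: pblock_mem.
- rewrite !cardsU1 cards1 !inE.
  by rewrite (negbTE Bxy) (negbTE dxz) (negbTE dxw) (negbTE dyz) (negbTE dyw) (negbTE Bzw).
set M := \matrix_(i < 3) nth 0 [:: x - a; y - a; z - a] i.
have [U [rU MU]] := LA1 (rank_leq_row M).
have rowU (i : 'I_3) v : nth 0 [:: x - a; y - a; z - a] i = v -> (v <= U)%MS.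
  by move=> Ev; apply: submx_trans MU; apply: (eq_row_sub i); rewrite rowK.
have xU : (x - a <= U)%MS by apply: (rowU (@Ordinal 3 0 isT)).
have yU : (y - a <= U)%MS by apply: (rowU (@Ordinal 3 1 isT)).
have zU : (z - a <= U)%MS by apply: (rowU (@Ordinal 3 2 isT)).
have wU : (w - a <= U)%MS.
  rewrite (third_eq e1) in yU; rewrite (third_eq e2) (A_w a b x z).
  by apply: addmx_sub; [apply: addmx_sub | rewrite eqmx_opp].
exists [set t : point | (t - a <= U)%MS]; split.
  by exists a, U.
apply/subsetP => t /bigcupP[B BL tB]; rewrite inE.
move: BL tB => /setU1P[->|/setU1P[->|/setU1P[->|/set1P->]]].
- by rewrite Ex; apply: inH.
- by rewrite Ey; apply: inH.
- by rewrite Ez; apply: inH.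
- by rewrite Ew; apply: inH.
Qed.

Lemma aline_card a (B : {set point}) : aline a B -> #|B| = 2%N.
Proof.
move=> /existsP[b /existsP[c /andP[/andP[/andP[/andP[/eqP EB _] _] _] bc]]].
by rewrite EB cards2 bc.
Qed.

Lemma aline_ex a (B : {set point}) : aline a B -> exists x, x \in B.
Proof.
move=> /existsP[b /existsP[c /andP[/andP[/andP[/andP[/eqP EB _] _] _] _]]].
by exists b; rewrite EB !inE eqxx.
Qed.

Lemma card_cover10 a (L : {set {set point}}) : #|L| = 5%N ->
  {in L, forall l, aline a l} -> trivIset L -> #|cover L| = 10%N.
Proof.
move=> L5 HL tL.
move: (leq_card_cover L) => [_]; rewrite tL => /eqP ->.
rewrite (eq_bigr (fun _ => 2%N)); first by rewrite sum_nat_const L5.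
by move=> B BL; exact: aline_card (HL B BL).
Qed.

Lemma A_ap (a p x : point) : a - p = - ((x - p) + ((- a - x) - p)).
Proof. apply/rowP => i; rewrite !mxE; move: (a 0 i) (p 0 i) (x 0 i); do 3 c1; apply/eqP; exact isT. Qed.
Lemma A_sub (a p x : point) : x - a = (x - p) - (a - p).
Proof. apply/rowP => i; rewrite !mxE; move: (a 0 i) (p 0 i) (x 0 i); do 3 c1; apply/eqP; exact isT. Qed.

Lemma sum4 (V : lmodType 'F_3) (k : 'I_4 -> 'F_3) (f : 'I_4 -> V) :
  \sum_i k i *: f i = k (@Ordinal 4 0 isT) *: f (@Ordinal 4 0 isT)
    + k (@Ordinal 4 1 isT) *: f (@Ordinal 4 1 isT)
    + k (@Ordinal 4 2 isT) *: f (@Ordinal 4 2 isT)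
    + k (@Ordinal 4 3 isT) *: f (@Ordinal 4 3 isT).
Proof.
rewrite big_ord_recr big_ord_recr big_ord_recr big_ord_recr big_ord0.
rewrite -[LHS]/(0 + _ + _ + _ + _) add0r.
by congr (_ + _ + _ + _); congr (k _ *: f _); apply: val_inj.
Qed.

Lemma bwd a (L : {set {set point}}) (HL : {in L, forall l, aline a l}) (tL : trivIset L)
  (cD : cap (cover L))
  (Hb : forall b : point, b \notin cover L -> b != a -> (#|lines_in (b |: cover L)| <= 1)%N)
  (L' : {set {set point}}) : L' \subset L -> #|L'| = 4%N -> ~ cohyperplanar (cover L').
Proof.
move=> sL c4 [H [[p [U [rU EH]]] sH]].
have sz : size (enum L') = 4%N by rewrite -cardE.
have un := enum_uniq (mem L').
have mE B : (B \in L') = (B \in enum L') by rewrite mem_enum.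
move: sz un mE; case: (enum L') => [|B0 [|B1 [|B2 [|B3 [|]]]]] //= _.
rewrite !inE !negb_or => /and4P[/and3P[d01 d02 d03] /andP[d12 d13] d23 _] mE.
have inL' B : B \in [:: B0; B1; B2; B3] -> B \in L by rewrite -mE => /(subsetP sL).
have B0L' : B0 \in L' by rewrite mE !inE eqxx ?orbT.
have B1L' : B1 \in L' by rewrite mE !inE eqxx ?orbT.
have B2L' : B2 \in L' by rewrite mE !inE eqxx ?orbT.
have B3L' : B3 \in L' by rewrite mE !inE eqxx ?orbT.
have B0L : B0 \in L by apply: inL'; rewrite !inE eqxx ?orbT.
have B1L : B1 \in L by apply: inL'; rewrite !inE eqxx ?orbT.
have B2L : B2 \in L by apply: inL'; rewrite !inE eqxx ?orbT.
have B3L : B3 \in L by apply: inL'; rewrite !inE eqxx ?orbT.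
have [x0 x0B] := aline_ex (HL _ B0L).
have [x1 x1B] := aline_ex (HL _ B1L).
have [x2 x2B] := aline_ex (HL _ B2L).
have [x3 x3B] := aline_ex (HL _ B3L).
have inH' t : t \in cover L' -> (t - p <= U)%MS.
  by move=> tc; move/subsetP: sH => /(_ t tc); rewrite EH inE.
have ap : (a - p <= U)%MS.
  rewrite (A_ap a p x0) eqmx_opp; apply: addmx_sub; apply: inH'.
    exact: in_cover B0L' x0B.
  exact: in_cover B0L' (partner_in HL B0L x0B).
have vU (B : {set point}) x : B \in L' -> x \in B -> (x - a <= U)%MS.
  move=> BL' xB; rewrite (A_sub a p x); apply: addmx_sub; last by rewrite eqmx_opp.
  exact: inH' (in_cover BL' xB).
set M := \matrix_(i < 4) nth 0 [:: x0 - a; x1 - a; x2 - a; x3 - a] i.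
apply: (LA2 (M := M) rU).
  apply/row_subP => i; rewrite rowK; case: i => [[|[|[|[|//]]]] Hi] /=.
  - exact: vU B0L' x0B.
  - exact: vU B1L' x1B.
  - exact: vU B2L' x2B.
  - exact: vU B3L' x3B.
move=> v; rewrite mulmx_sum_row sum4 !rowK /= => rel.
have [e0 e1 e2 e3] := core HL tL cD Hb x0B x1B x2B x3B B0L B1L B2L B3L d01 d02 d03 d12 d13 d23 rel.
apply/rowP => j; rewrite mxE; case: j => [[|[|[|[|//]]]] Hj];
  [rewrite -e0|rewrite -e1|rewrite -e2|rewrite -e3]; congr (v 0 _); exact: val_inj.
Qed.

Theorem lemma3p4 (a : point) (L : {set {set point}}) :
  #|L| = 5%N -> {in L, forall l, aline a l} -> trivIset L -> cap (cover L) ->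
  (demicap a (cover L) <->
   forall b : point, b \notin cover L -> b != a ->
     (#|lines_in (b |: cover L)| <= 1)%N).
Proof.
move=> L5 HL tL cD; split.
  move=> [_ [L0 [_ [HL0 [tL0 [cov [_ Hnh]]]]]]] b bD ba.
  rewrite -cov in bD *.
  by apply: (fwd HL0 tL0 _ Hnh bD ba); rewrite cov.
move=> Hb; split => //; exists L; do !split => //.
  exact: card_cover10 L5 HL tL.
exact: bwd HL tL cD Hb.
Qed.
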